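(* Let $f:\mathbb{R}^n\to\mathbb{R}$ be convex and $M$-Lipschitz continuous, $h$ proper closed convex, $\phi=f+h$, $\lambda>0$, $\delta>0$, and $x_0=w_{k-1}\in\mathrm{dom}\, h$. Let $\psi(u)=\phi(u)+\frac1{2\lambda}\|u-x_0\|^2$. For $j\ge1$ let $\Gamma_j:\mathbb{R}^n\to\mathbb{R}$ be convex functions with $\Gamma_j\le f$ (bundle models), let $x_j=\mathrm{argmin}_{u}\{\Gamma_j(u)+h(u)+\frac1{2\lambda}\|u-x_0\|^2\}$, $m_j=\Gamma_j(x_j)+h(x_j)+\frac1{2\lambda}\|x_j-x_0\|^2$, $\tilde x_j\in\mathrm{Argmin}\{\psi(u):u\in\{x_0,x_1,\dots,x_j\}\}$, and $t_j=\psi(\tilde x_j)-m_j$. Suppose $j$ is the first index with $t_j\le\delta$, and set $$w_k=x_j,\quad \tilde w_k=\tilde x_j,\quad u_k=\frac{x_0-x_j}{\lambda},\quad \eta_k=\phi(\tilde x_j)-(\Gamma_j+h)(x_j)+\frac1\lambda\langle x_0-x_j,x_j-\tilde x_j\rangle.$$ Then $u_k\in\partial_{\eta_k}\phi(\tilde w_k)$, $\|\lambda u_k+\tilde w_k-w_{k-1}\|^2+2\lambda\eta_k\le2\lambda\delta$, and $w_k=w_{k-1}-\lambda u_k$; that is, this step of the modern proximal bundle method is an iteration of the HPE framework.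
   Context: $\partial_\varepsilon\phi(x)=\{s:\phi(y)\ge\phi(x)+\langle s,y-x\rangle-\varepsilon\ \forall y\}$. HPE framework (stepsize $\lambda$, tolerance $\delta$): at iteration $k$, find $(\tilde w_k,u_k,\eta_k)$ with $u_k\in\partial_{\eta_k}\phi(\tilde w_k)$ and $\|\lambda u_k+\tilde w_k-w_{k-1}\|^2+2\lambda\eta_k\le2\lambda\delta$, then set $w_k=w_{k-1}-\lambda u_k$. *)

(* Defs.v *)
From HB Require Import structures.
From mathcomp Require Import all_boot all_order all_algebra.
From mathcomp Require Import all_classical all_reals all_analysis.
Set Implicit Arguments. Unset Strict Implicit. Unset Printing Implicit Defensive.
Import Order.TTheory GRing.Theory Num.Theory numFieldNormedType.Exports.
Local Open Scope ring_scope.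
Local Open Scope ereal_scope.

Section Defs.
Variables (R : realType) (n : nat).
Local Notation V := 'rV[R]_n.

Definition dot (u v : V) : R := (\sum_(i < n) u ord0 i * v ord0 i)%R.
Definition sqnorm (u : V) : R := dot u u.
Definition enorm (u : V) : R := Num.sqrt (sqnorm u).

Definition convex_fun (f : V -> R) : Prop :=
  forall (x y : V) (t : R), (0 <= t <= 1)%R ->
    (f (t *: x + (1 - t) *: y) <= t * f x + (1 - t) * f y)%R.

Definition lipschitz_with (M : R) (f : V -> R) : Prop :=
  forall x y : V, (`|f x - f y| <= M * enorm (x - y))%R.

(* convexity of an extended-real-valued function (convention 0 * +oo = 0) *)
Definition convex_efun (h : V -> \bar R) : Prop :=
  forall (x y : V) (t : R), (0 <= t <= 1)%R ->
    h (t *: x + (1 - t) *: y)%R <= t%:E * h x + (1 - t)%:E * h y.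

Definition proper_fun (h : V -> \bar R) : Prop :=
  (exists x, h x \is a fin_num) /\ (forall x, h x != -oo).

Definition epigraph (h : V -> \bar R) : set (V * R) :=
  [set p | h p.1 <= p.2%:E].
Definition closed_fun (h : V -> \bar R) : Prop := closed (epigraph h).

Definition dom (h : V -> \bar R) : set V := [set x | h x < +oo].

Definition eps_subdiff (phi : V -> \bar R) (eps : R) (x s : V) : Prop :=
  forall y : V, phi x + (dot s (y - x) - eps)%:E <= phi y.

End Defs.

(* Main.v *)
Require Import Defs.
From HB Require Import structures.
From mathcomp Require Import all_boot all_order all_algebra.
From mathcomp Require Import all_classical all_reals all_analysis.
From mathcomp Require Import ring lra.
Import Order.TTheory GRing.Theory Num.Theory numFieldNormedType.Exports.
Local Open Scope ring_scope.

Section Aux.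
Variables (R : realType) (n : nat).
Implicit Types (u v w : 'rV[R]_n).

Lemma dotC u v : dot u v = dot v u.
Proof. by rewrite /dot; apply: eq_bigr => i _; rewrite mulrC. Qed.
Lemma dotDl u v w : dot (u + v) w = dot u w + dot v w.
Proof. by rewrite /dot -big_split; apply: eq_bigr => i _; rewrite mxE mulrDl. Qed.
Lemma dotZl (a : R) u w : dot (a *: u) w = a * dot u w.
Proof. by rewrite /dot mulr_sumr; apply: eq_bigr => i _; rewrite mxE mulrA. Qed.
Lemma dotNl u w : dot (- u) w = - dot u w.
Proof. by rewrite -scaleN1r dotZl mulN1r. Qed.
Lemma dotBl u v w : dot (u - v) w = dot u w - dot v w.
Proof. by rewrite dotDl dotNl. Qed.
Lemma dotDr u v w : dot w (u + v) = dot w u + dot w v.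
Proof. by rewrite dotC dotDl !(dotC w). Qed.
Lemma dotZr (a : R) u w : dot w (a *: u) = a * dot w u.
Proof. by rewrite dotC dotZl dotC. Qed.
Lemma dotNr u w : dot w (- u) = - dot w u.
Proof. by rewrite dotC dotNl dotC. Qed.
Lemma sqnorm_ge0 u : 0 <= sqnorm u.
Proof. by apply: sumr_ge0 => i _; rewrite -expr2 sqr_ge0. Qed.
Lemma sqnormD u v : sqnorm (u + v) = sqnorm u + 2 * dot u v + sqnorm v.
Proof. rewrite /sqnorm dotDl !dotDr (dotC v u); ring. Qed.
Lemma sqnormZ (a : R) u : sqnorm (a *: u) = a ^+ 2 * sqnorm u.
Proof. by rewrite /sqnorm dotZl dotZr mulrA expr2. Qed.
Lemma vecid (y xj x0 : 'rV[R]_n) (t : R) :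
  t *: y + (1 - t) *: xj - x0 = (xj - x0) + t *: (y - xj).
Proof. apply/rowP => k; rewrite !mxE; ring. Qed.
End Aux.

Lemma A_ge0 (R : realType) (A B : R) : 0 <= B ->
  (forall t, 0 < t -> t <= 1 -> 0 <= A + t * B) -> 0 <= A.
Proof.
move=> hB H; rewrite leNgt; apply/negP => hA.
have hD : 0 < - A + B by lra.
set t := - A / (- A + B).
have htD : t * (- A + B) = - A by rewrite /t divfK // gt_eqF.
have ht0 : 0 < t by rewrite /t divr_gt0 //; lra.
have ht1 : t <= 1 by rewrite /t ler_pdivrMr // mul1r; lra.
have := H t ht0 ht1 => h1.
have : 0 <= (A + t * B) * (- A + B) by rewrite mulr_ge0 // ltW.
nra.
Qed.
Lemma subgrad (R : realType) (n : nat) (G : 'rV[R]_n -> R) (h : 'rV[R]_n -> \bar R)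
  (lam : R) (x0 xj y : 'rV[R]_n) (a c : R) :
  convex_fun G -> convex_efun h -> (forall p, h p != -oo%E) -> 0 < lam ->
  h xj = a%:E -> h y = c%:E ->
  (forall u, ((G xj)%:E + h xj + (lam^-1 / 2 * sqnorm (xj - x0))%:E <=
             (G u)%:E + h u + (lam^-1 / 2 * sqnorm (u - x0))%:E)%E) ->
  G xj + a + dot (lam^-1 *: (x0 - xj)) (y - xj) <= G y + c.
Proof.
move=> hG hh hp hlam ha hc hmin.
set L := (lam^-1)%R.
have hL : 0 < L by rewrite /L invr_gt0.
have -> : dot (L *: (x0 - xj)) (y - xj) = - (L * dot (xj - x0) (y - xj)).
  by rewrite dotZl -opprB dotNl mulrN.
set D := dot (xj - x0) (y - xj).
set S := sqnorm (y - xj).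
set Su := sqnorm (xj - x0).
suff : 0 <= G y + c - G xj - a + L * D by lra.
apply: (@A_ge0 _ _ (L / 2 * S)); first by rewrite mulr_ge0 ?sqnorm_ge0 // divr_ge0 // ltW.
move=> t ht0 ht1.
rewrite -(pmulr_rge0 _ ht0).
set z := t *: y + (1 - t) *: xj.
have hGz : G z <= t * G y + (1 - t) * G xj by apply: hG; rewrite ltW ?ht1.
have := hh y xj t; rewrite ltW ?ht1 // => /(_ isT); rewrite ha hc -!EFinM -EFinD => hz.
case E: (h z) hz => [e| |] hz; last by move: (hp z); rewrite E.
  2: by move: hz; rewrite leNgt ltey.
rewrite lee_fin in hz.
have := hmin z; have hv : z - x0 = xj - x0 + t *: (y - xj) by rewrite /z vecid.
rewrite E ha -!EFinD lee_fin hv -/L -/Su.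
have -> : sqnorm (xj - x0 + t *: (y - xj)) = Su + 2 * t * D + t ^+ 2 * S.
  by rewrite sqnormD sqnormZ dotZr -/D -/Su -/S mulrA.
move=> hm.
nra.
Qed.
Local Open Scope ereal_scope.
Theorem lemma3p1 (R : realType) (n : nat)
  (f : 'rV[R]_n -> R) (M : R) (h : 'rV[R]_n -> \bar R)
  (lam delta : R) (x0 : 'rV[R]_n)
  (Gamma : nat -> 'rV[R]_n -> R) (x xt : nat -> 'rV[R]_n) (j : nat) :
  convex_fun f -> lipschitz_with M f ->
  proper_fun h -> closed_fun h -> convex_efun h ->
  (0 < lam)%R -> (0 < delta)%R -> dom h x0 ->
  let phi := fun u => (f u)%:E + h u in
  let psi := fun u => phi u + (lam^-1 / 2 * sqnorm (u - x0))%:E in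
  let model := fun i u =>
    (Gamma i u)%:E + h u + (lam^-1 / 2 * sqnorm (u - x0))%:E in
  let m := fun i => model i (x i) in
  let t := fun i => psi (xt i) - m i in
  (* bundle models *)
  (forall i, (1 <= i)%N -> convex_fun (Gamma i)) ->
  (forall i u, (1 <= i)%N -> (Gamma i u <= f u)%R) ->
  (* x_0 is the prox center; x_i = argmin of the model subproblem *)
  x 0%N = x0 ->
  (forall i, (1 <= i)%N -> forall u, model i (x i) <= model i u) ->
  (* xt_i in Argmin { psi(u) : u in {x_0, ..., x_i} } *)
  (forall i, (1 <= i)%N ->
     (exists l, (l <= i)%N /\ xt i = x l) /\
     (forall l, (l <= i)%N -> psi (xt i) <= psi (x l))) ->
  (* j is the first index with t_j <= delta *)
  (1 <= j)%N -> t j <= delta%:E ->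
  (forall i, (1 <= i)%N -> (i < j)%N -> delta%:E < t i) ->
  let wk := x j in
  let wtk := xt j in
  let uk := (lam^-1 *: (x0 - x j))%R in
  exists etak : R,
    etak%:E = phi (xt j) - ((Gamma j (x j))%:E + h (x j))
              + (lam^-1 * dot (x0 - x j) (x j - xt j))%:E /\
    eps_subdiff phi etak wtk uk /\
    (sqnorm (lam *: uk + wtk - x0) + 2 * lam * etak <= 2 * lam * delta)%R /\
    wk = (x0 - lam *: uk)%R.
Proof.
move=> fconv _ [_ hp] _ hconv hlam hdelta hdom phi psi model m t hGc hGf hx0 hmin hxt hj htj _ wk wtk uk.
have finh : forall p, h p < +oo -> exists r, h p = r%:E.
  move=> p; case E: (h p) => [r| |] //; first by exists r.
  by move: (hp p); rewrite E.
have [a0 ha0] := finh _ hdom.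
set xj := x j; set xx := xt j.
have [a ha] : exists a, h xj = a%:E.
  apply: finh; have := hmin j hj x0; rewrite /model ha0.
  case E: (h xj) => [r| |].
  - by rewrite ltey.
  - by rewrite -!EFinD leNgt ltey.
  - by move: (hp xj); rewrite E.
have [b hb] : exists b, h xx = b%:E.
  apply: finh; have := (hxt j hj).2 0%N isT; rewrite hx0 /psi /phi ha0.
  case E: (h xx) => [r| |].
  - by rewrite ltey.
  - by rewrite -!EFinD leNgt ltey.
  - by move: (hp xx); rewrite E.
set L := (lam^-1)%R.
have hLl : (L * lam = 1)%R by rewrite /L mulVf // gt_eqF.
exists (f xx + b - (Gamma j xj + a) + L * dot (x0 - xj) (xj - xx))%R.
split; first by rewrite /phi hb ha EFinD EFinB !EFinD.
split.
  move=> y; rewrite /phi hb.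
  case E: (h y) => [c| |]; last by move: (hp y); rewrite E.
    2: by rewrite addey // leey.
  rewrite -!EFinD lee_fin.
  have := @subgrad _ _ _ _ _ x0 xj y _ _ (hGc j hj) hconv hp hlam ha E (hmin j hj).
  have -> : (y - xj = (y - xx) + (xx - xj))%R by apply/rowP => k; rewrite !mxE; ring.
  rewrite /uk -/xj -/L dotDr dotZl (@dotZl _ _ L (x0 - xj) (xx - xj)).
  have -> : (xj - xx = - (xx - xj))%R by rewrite opprB.
  rewrite dotNr.
  have := hGf j y hj.
  lra.
split; last by rewrite /wk /uk scalerA mulfV ?gt_eqF // scale1r opprB addrC subrK.
have -> : (lam *: uk + wtk - x0 = xx - xj)%R.
  by rewrite /uk scalerA mulfV ?gt_eqF // scale1r /wtk -/xx; apply/rowP => k; rewrite !mxE; ring.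
have htj2 : psi xx - model j xj <= delta%:E := htj.
move: htj2; rewrite /psi /model /phi ha hb -!EFinD.
have -> : (xx - x0 = (xx - xj) + (xj - x0))%R by apply/rowP => k; rewrite !mxE; ring.
rewrite sqnormD -/L.
have -> : (x0 - xj = - (xj - x0))%R by rewrite opprB.
have -> : (xj - xx = - (xx - xj))%R by rewrite opprB.
rewrite dotNl dotNr (@dotC _ _ (xx - xj)%R).
move=> H.
have hS := @sqnorm_ge0 _ _ (xx - xj)%R.
rewrite lee_fin in H.
set S1 := sqnorm (xx - xj)%R in H hS *.
set D1 := dot (xj - x0) (xx - xj) in H *.
set S2 := sqnorm (xj - x0) in H *.
have hlam0 : (lam != 0)%R by rewrite gt_eqF.
set T := (f xx + b + _ - _)%R in H.
have -> : (S1 + 2 * lam * (f xx + b - (Gamma j xj + a) + L * - - D1) = 2 * lam * T)%R.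
  by rewrite /T /L; field.
by rewrite ler_wpM2l // mulr_ge0 // ltW.
Qed.
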